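(* Let $a_n=\left|\Pi_n\wr C_2(1^11^1,1^11^2)\right|$. Then for $n\ge3$, $a_n=2a_{n-1}+(n-1)a_{n-2}$.
   Context: For $n\ge0$ let $[n]=\{1,\dots,n\}$. A $2$-colored set partition of $[n]$ is a set partition of $[n]$ together with an assignment of a color from $\{1,2\}$ to each element; $\Pi_n\wr C_2$ is the set of these. For a set $S$ of patterns, $\Pi_n\wr C_2(S)$ is the set of such colored partitions avoiding every pattern in $S$ in the pattern sense. For the patterns used here: $\sigma$ contains $1^11^1$ iff two elements in the same block have the same color; $\sigma$ contains $1^11^2$ iff there are $i<j$ in the same block with $i$ colored $1$ and $j$ colored $2$. *)

(* Defs.v *)
From mathcomp Require Import all_boot.
Set Implicit Arguments. Unset Strict Implicit. Unset Printing Implicit Defensive.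

(* [n] = {1,...,n} is modelled by 'I_n (element i+1 <-> ordinal i; order preserved).
   Colors {1,2} are modelled by 'I_2: color 1 = ord0, color 2 = ord_max (value 1). *)
Definition color1 : 'I_2 := ord0.
Definition color2 : 'I_2 := ord_max.

Definition colored_partition (n : nat) : finType :=
  ({set {set 'I_n}} * {ffun 'I_n -> 'I_2})%type.

Definition is_colored_partition n (s : colored_partition n) : bool :=
  partition s.1 [set: 'I_n].

Definition contains_1111 n (s : colored_partition n) : bool :=
  [exists B in s.1, exists i in B, exists j in B, (i != j) && (s.2 i == s.2 j)].

Definition contains_1112 n (s : colored_partition n) : bool :=
  [exists B in s.1, exists i in B, exists j in B,
     [&& (i < j)%N, s.2 i == color1 & s.2 j == color2]].

Definition a (n : nat) : nat :=
  #|[set s : colored_partition n |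
      [&& is_colored_partition s, ~~ contains_1111 s & ~~ contains_1112 s]]|.

(* Main.v *)
Require Import Defs.
From mathcomp Require Import all_boot.
Set Implicit Arguments. Unset Strict Implicit. Unset Printing Implicit Defensive.

Definition colf n (x y : 'I_n) : 'I_2 := if (x < y)%N then color2 else color1.
Definition okx n (A : {set 'I_n}) (p : {ffun 'I_n -> 'I_n}) (c : {ffun 'I_n -> 'I_2}) x :=
  if x \in A then (p (p x) == x) && ((p x != x) ==> (c x == colf x (p x)))
  else (p x == x) && (c x == color1).
Definition RR n (A : {set 'I_n}) :=
  [set pc : {ffun 'I_n -> 'I_n} * {ffun 'I_n -> 'I_2} | [forall x, okx A pc.1 pc.2 x]].
Definition upd (T : finType) (U : Type) (f : {ffun T -> U}) (a : T) (v : U) : {ffun T -> U} :=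
  [ffun x => if x == a then v else f x].
Lemma updE (T : finType) (U : Type) (f : {ffun T -> U}) a v x :
  upd f a v x = if x == a then v else f x.
Proof. by rewrite ffunE. Qed.

Lemma RRP n (A : {set 'I_n}) p c : ((p, c) \in RR A) = [forall x, okx A p c x].
Proof. by rewrite inE. Qed.

Lemma okx_in n (A : {set 'I_n}) p c x : x \in A -> okx A p c x ->
  p (p x) = x /\ (p x != x -> c x = colf x (p x)).
Proof. by rewrite /okx => ->; case/andP => /eqP -> /implyP H; split => // /H /eqP. Qed.
Lemma okx_out n (A : {set 'I_n}) p c x : x \notin A -> okx A p c x ->
  p x = x /\ c x = color1.
Proof. by rewrite /okx => /negbTE ->; case/andP => /eqP -> /eqP. Qed.

Lemma R1card n (A : {set 'I_n}) m : m \in A ->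
  #|[set pc in RR A | pc.1 m == m]| = 2 * #|RR (A :\ m)|.
Proof.
move=> mA.
rewrite (_ : 2 * _ = #|RR (A :\ m)| * #|[set: 'I_2]|); last by rewrite cardsT card_ord mulnC.
rewrite -cardsX.
set h := fun (q : ({ffun 'I_n -> 'I_n} * {ffun 'I_n -> 'I_2}) * 'I_2) =>
  (q.1.1, upd q.1.2 m q.2).
have hinj : {in setX (RR (A :\ m)) [set: 'I_2] &, injective h}.
  move=> [[p c] col] [[p' c'] col']; rewrite !inE /= !andbT => H H' [] <-.
  move/forallP: H => /(_ m) /okx_out; rewrite !inE eqxx /= => /(_ isT) [_ cm].
  move/forallP: H' => /(_ m) /okx_out; rewrite !inE eqxx /= => /(_ isT) [_ cm'].
  move=> E.
  have Em : col = col' by have := congr1 (fun f : {ffun 'I_n -> 'I_2} => f m) E; rewrite !updE eqxx.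
  rewrite Em; congr (_, _, _); apply/ffunP => x.
  have := congr1 (fun f : {ffun 'I_n -> 'I_2} => f x) E; rewrite !updE; case: eqP => [->|//].
  by rewrite cm cm'.
rewrite -(card_in_imset hinj); apply: eq_card => -[p c].
apply/idP/idP.
- rewrite inE RRP /= => /andP [/forallP H /eqP pm].
  apply/imsetP; exists ((p, upd c m color1), c m).
    rewrite !inE /= andbT; apply/forallP => x.
    have := H x; rewrite /okx !inE updE.
    by case: (x =P m) => [->|_] //=; rewrite pm !eqxx.
  rewrite /h /=; congr (_, _); apply/ffunP => x; rewrite !updE.
  by case: eqP => [->|].
- case/imsetP => -[[p' c'] col]; rewrite !inE /= andbT => /forallP H [-> ->].
  have mm : m \notin A :\ m by rewrite !inE eqxx.
  have [pm _] := okx_out mm (H m).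
  rewrite pm eqxx andbT; apply/forallP => x.
  have := H x; rewrite /okx !inE updE.
  case: (x =P m) => [->|_] /=; last by [].
  by rewrite mA !pm !eqxx.

Qed.

Lemma R2card n (A : {set 'I_n}) m k : m \in A -> k \in A -> k != m ->
  #|[set pc in RR A | pc.1 m == k]| = #|RR (A :\ m :\ k)|.
Proof.
move=> mA kA km.
have mk : m != k by rewrite eq_sym.
set B := A :\ m :\ k.
have mB : m \notin B by rewrite !inE eqxx andbF.
have kB : k \notin B by rewrite !inE eqxx.
have xB x : x != m -> x != k -> (x \in B) = (x \in A) by move=> /negbTE h1 /negbTE h2; rewrite !inE h1 h2.
set h := fun (q : {ffun 'I_n -> 'I_n} * {ffun 'I_n -> 'I_2}) =>
  (upd (upd q.1 m k) k m, upd (upd q.2 m (colf m k)) k (colf k m)).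
have hinj : {in RR B &, injective h}.
  move=> [p c] [p' c']; rewrite !RRP => /forallP H /forallP H' [E1 E2].
  have [pm cm] := okx_out mB (H m); have [pk ck] := okx_out kB (H k).
  have [pm' cm'] := okx_out mB (H' m); have [pk' ck'] := okx_out kB (H' k).
  congr (_, _); apply/ffunP => x.
    have := congr1 (fun f : {ffun 'I_n -> 'I_n} => f x) E1; rewrite !updE.
    case: (x =P k) => [->|_]; first by rewrite pk pk'.
    by case: (x =P m) => [->|_]; first by rewrite pm pm'.
  have := congr1 (fun f : {ffun 'I_n -> 'I_2} => f x) E2; rewrite !updE.
  case: (x =P k) => [->|_]; first by rewrite ck ck'.
  by case: (x =P m) => [->|_]; first by rewrite cm cm'.
rewrite -(card_in_imset hinj); apply: eq_card => -[p c].
apply/idP/idP.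
- rewrite inE RRP /= => /andP [/forallP H /eqP pm].
  have [ppm cm] := okx_in mA (H m).
  have [ppk ck] := okx_in kA (H k).
  rewrite pm in ppm cm; rewrite ppm in ck.
  have {}cm := cm km; have {}ck := ck mk.
  apply/imsetP; exists (upd (upd p m m) k k, upd (upd c m color1) k color1).
    rewrite RRP; apply/forallP => x; rewrite /okx !updE.
    case: (x =P k) => [->|/eqP xk]; first by rewrite (negbTE kB) !eqxx.
    case: (x =P m) => [->|/eqP xm]; first by rewrite (negbTE mB) !eqxx.
    rewrite (xB x xm xk).
    case xA: (x \in A); last first.
      by have [-> ->] := okx_out (negbT xA) (H x); rewrite ?(negbTE xk) ?(negbTE xm) !eqxx.
    have [ppx cx] := okx_in xA (H x).
    have pxm : p x != m by apply/eqP => E; move: xk; rewrite -ppx E pm eqxx.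
    have pxk : p x != k by apply/eqP => E; move: xm; rewrite -ppx E ppm eqxx.
    rewrite (negbTE pxm) (negbTE pxk) ppx eqxx /=.
    by apply/implyP => /cx ->.
  rewrite /h /=; congr (_, _); apply/ffunP => x; rewrite !updE.
    by case: (x =P k) => [->|_]; [rewrite ppm | case: (x =P m) => [->|]].
  by case: (x =P k) => [->|_]; [rewrite ck | case: (x =P m) => [->|]].
- case/imsetP => -[p' c']; rewrite RRP => /forallP H [-> ->].
  have [pm _] := okx_out mB (H m); have [pk _] := okx_out kB (H k).
  rewrite inE !updE (negbTE mk) !eqxx andbT RRP.
  apply/forallP => x; rewrite /okx !updE.
  case: (x =P k) => [->|/eqP xk]; first by rewrite kA (negbTE mk) !eqxx.
  case: (x =P m) => [->|/eqP xm]; first by rewrite mA !eqxx /= implybT.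
  have := H x; rewrite /okx (xB x xm xk).
  case xA: (x \in A); last by case/andP => /eqP -> ->; rewrite ?(negbTE xk) ?(negbTE xm) eqxx.
  case/andP => /eqP ppx cx.
  have pxm : p' x != m by apply/eqP => E; move: xm; rewrite -ppx E pm eqxx.
  have pxk : p' x != k by apply/eqP => E; move: xk; rewrite -ppx E pk eqxx.
  by rewrite (negbTE pxm) (negbTE pxk) ppx eqxx.
Qed.

Lemma RRrec n (A : {set 'I_n}) m : m \in A ->
  #|RR A| = 2 * #|RR (A :\ m)| + \sum_(k in A :\ m) #|RR (A :\ m :\ k)|.
Proof.
move=> mA.
rewrite -sum1_card (partition_big (fun pc : {ffun 'I_n -> 'I_n} * {ffun 'I_n -> 'I_2} => pc.1 m) predT) //=.
have E k : \sum_(i in RR A | i.1 m == k) 1 = #|[set pc in RR A | pc.1 m == k]|.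
  by rewrite -sum1_card; apply: eq_bigl => pc; rewrite !inE.
rewrite (bigD1 m) //= E R1card //; congr (_ + _).
rewrite [RHS]big_mkcond [LHS]big_mkcond /=; apply: eq_bigr => k _.
rewrite E !inE; case: (k =P m) => [_|/eqP km] //=.
case kA: (k \in A); first by rewrite R2card.
apply/eqP; rewrite cards_eq0; apply/eqP/setP => -[p c]; rewrite !inE /=.
apply/negbTE; apply/andP => -[/forallP H /eqP pm].
have [ppm _] := okx_in mA (H m).
have [pk _] := okx_out (negbT kA) (H k).
by move: km; rewrite -ppm pm pk eqxx.
Qed.

Fixpoint f (k : nat) : nat :=
  match k with
  | 0 => 1
  | 1 => 2
  | (k1.+1 as k2).+1 => 2 * f k2 + k2 * f k1
  end.

Lemma fS k : f k.+1 = 2 * f k + k * f k.-1.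
Proof. by case: k. Qed.

Lemma RR0 n : #|RR (set0 : {set 'I_n})| = 1.
Proof.
transitivity #|[set ([ffun x : 'I_n => x], [ffun _ : 'I_n => color1])]|; last by rewrite cards1.
apply: eq_card => -[p c].
rewrite RRP !inE; apply/forallP/eqP.
- move=> H; have H' x := okx_out (negbT (in_set0 x)) (H x).
  by congr (_, _); apply/ffunP => x; rewrite ffunE; case: (H' x).
- by case=> -> ->  x; rewrite /okx in_set0 !ffunE !eqxx.
Qed.

Lemma RRcard n k (A : {set 'I_n}) : #|A| = k -> #|RR A| = f k.
Proof.
elim/ltn_ind: k A => -[|k] IH A cA.
  by move/eqP: cA; rewrite cards_eq0 => /eqP ->; rewrite RR0.
have [m mA] : exists m, m \in A.
  by apply/set0Pn; rewrite -cards_eq0 cA.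
have cAm : #|A :\ m| = k by move: cA; rewrite (cardsD1 m) mA add1n => -[].
rewrite (RRrec mA) fS (IH k) //.
rewrite (eq_bigr (fun _ => f k.-1)); last first.
  move=> j jA; apply: IH; first by rewrite ltnS leq_pred.
  by rewrite (cardsD1 j) jA add1n in cAm; rewrite -cAm.
by rewrite sum_nat_const cAm mulnC.
Qed.

Lemma I2cases (a : 'I_2) : a = color1 \/ a = color2.
Proof. case: a => [[|[|//]] H]; [left|right]; exact: val_inj. Qed.

Lemma I2_12 : color1 != color2. Proof. by []. Qed.

Lemma I2_3 (a b d : 'I_2) : a != b -> a != d -> b = d.
Proof.
by case: (I2cases a) => ->; case: (I2cases b) => ->; case: (I2cases d) => ->.
Qed.

Lemma colf_neq n (x y : 'I_n) : x != y -> colf x y != colf y x.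
Proof.
rewrite /colf => xy; case: ltngtP => //; last by move/val_inj => E; rewrite E eqxx in xy.
Qed.

Lemma set2_swap n (p : 'I_n -> 'I_n) (inv : forall x, p (p x) = x) x z :
  z \in [set x; p x] -> [set x; p x] = [set z; p z].
Proof. by rewrite !inE => /orP [] /eqP ->; rewrite ?inv // setUC. Qed.

Definition gmap n (pc : {ffun 'I_n -> 'I_n} * {ffun 'I_n -> 'I_2}) : colored_partition n :=
  ([set [set x; pc.1 x] | x : 'I_n], pc.2).

Definition valid n (s : colored_partition n) :=
  [&& is_colored_partition s, ~~ contains_1111 s & ~~ contains_1112 s].

Lemma gvalid n (p : {ffun 'I_n -> 'I_n}) (c : {ffun 'I_n -> 'I_2})
  (inv : forall x, p (p x) = x) (col : forall x, p x != x -> c x = colf x (p x)) :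
  valid (gmap (p, c)).
Proof.
have mem2 i j x : i \in [set x; p x] -> j \in [set x; p x] -> i != j ->
    j = p i /\ p i != i.
  move=> ix jx ij; rewrite (set2_swap inv ix) !inE in jx.
  have ji : (j == i) = false by apply/negbTE; rewrite eq_sym.
  rewrite ji /= in jx; move/eqP: jx => jpi; split=> //.
  by rewrite -jpi eq_sym.
rewrite /valid /is_colored_partition /contains_1111 /contains_1112 /=.
apply/and3P; split.
- rewrite /partition; apply/and3P; split.
  + apply/eqP/setP => y; rewrite inE; apply/bigcupP; exists [set y; p y].
      by apply: imset_f.
    by rewrite set21.
  + apply/trivIsetP => B1 B2 /imsetP[x _ ->] /imsetP[y _ ->] neq.
    rewrite -setI_eq0; apply/eqP/setP => z; rewrite in_set0 in_setI.
    apply/negP => /andP [zx zy]; move: neq.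
    by rewrite (set2_swap inv zx) (set2_swap inv zy) eqxx.
  + apply/imsetP => -[x _ E]; have := set21 x (p x); by rewrite -E inE.
- apply/negP => /existsP [B /andP [/imsetP [x _ ->] /existsP [i /andP [ix /existsP [j /andP [jx /andP [ij /eqP cij]]]]]]].
  have [jpi pii] := mem2 i j x ix jx ij.
  have ppi : p (p i) != p i by rewrite inv eq_sym.
  move: cij; rewrite jpi (col _ pii) (col _ ppi) inv => E.
  by move: (colf_neq pii); rewrite E eqxx.
- apply/negP => /existsP [B /andP [/imsetP [x _ ->] /existsP [i /andP [ix /existsP [j /andP [jx /and3P [hij /eqP ci /eqP cj]]]]]]].
  have ij : i != j by apply/eqP => E; rewrite E ltnn in hij.
  have [jpi pii] := mem2 i j x ix jx ij.
  by move: ci; rewrite (col _ pii) -jpi /colf hij.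
Qed.

Lemma ginj n (p p' : {ffun 'I_n -> 'I_n}) (c c' : {ffun 'I_n -> 'I_2})
  (inv : forall x, p (p x) = x) (inv' : forall x, p' (p' x) = x) :
  gmap (p, c) = gmap (p', c') -> (p, c) = (p', c').
Proof.
case=> E1 ->; congr (_, _); apply/ffunP => x.
have : [set x; p x] \in [set [set y; p' y] | y : 'I_n] by rewrite -E1; apply: imset_f.
case/imsetP => y _ Exy.
have xin : x \in [set y; p' y] by rewrite -Exy set21.
rewrite (set2_swap inv' xin) in Exy.
have : p x \in [set x; p' x] by rewrite -Exy set22.
rewrite !inE => /orP [/eqP pxx | /eqP //].
have : p' x \in [set x; p x] by rewrite Exy set22.
by rewrite pxx !inE orbb => /eqP ->.
Qed.

Lemma gsurj n (s : colored_partition n) : valid s ->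
  exists p : {ffun 'I_n -> 'I_n}, [/\ (forall x, p (p x) = x),
    (forall x, p x != x -> s.2 x = colf x (p x)) & s = gmap (p, s.2)].
Proof.
case: s => P c; rewrite /valid /is_colored_partition /contains_1111 /contains_1112 /=.
case/and3P => partP n1 n2.
case/and3P: partP => /eqP covP triv P0.
have inb x : x \in pblock P x by rewrite mem_pblock covP inE.
have bP x : pblock P x \in P by apply: pblock_mem; rewrite covP inE.
have no11 B i j : B \in P -> i \in B -> j \in B -> i != j -> c i != c j.
  move=> BP iB jB ij; apply/negP => cij; move/negP: n1; apply.
  apply/existsP; exists B; rewrite BP /=; apply/existsP; exists i; rewrite iB /=.
  by apply/existsP; exists j; rewrite jB ij cij.
have no12 B i j : B \in P -> i \in B -> j \in B -> (i < j)%N -> c i = color1 -> c j = color2 -> False.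
  move=> BP iB jB ij ci cj; move/negP: n2; apply.
  apply/existsP; exists B; rewrite BP /=; apply/existsP; exists i; rewrite iB /=.
  by apply/existsP; exists j; rewrite jB ij ci cj !eqxx.
pose p := [ffun x => odflt x [pick y in pblock P x | y != x]].
have blk x : pblock P x = [set x; p x].
  rewrite /p ffunE; case: pickP => [y /andP [yb yx] | none] /=.
  - apply/setP => z; rewrite !inE; apply/idP/idP.
    + move=> zb; case: (z =P x) => //= /eqP zx; apply/negPn/negP => zy.
      have xy : x != y by rewrite eq_sym.
      have xz : x != z by rewrite eq_sym.
      have yz : y != z by rewrite eq_sym.
      have h2 := no11 _ _ _ (bP x) (inb x) yb xy.
      have h3 := no11 _ _ _ (bP x) (inb x) zb xz.
      have h4 := no11 _ _ _ (bP x) yb zb yz.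
      by rewrite (I2_3 h2 h3) eqxx in h4.
    + by case/orP => /eqP ->; [exact: inb | exact: yb].
  - apply/setP => z; rewrite !inE orbb; apply/idP/eqP => [zb|->]; last exact: inb.
    apply/eqP/negPn/negP => zx; move: (none z); by rewrite /= zb zx.
have inv x : p (p x) = x.
  have pxb : p x \in pblock P x by rewrite blk set22.
  have := same_pblock triv pxb; rewrite !blk => E.
  have : x \in [set p x; p (p x)] by rewrite E set21.
  rewrite !inE => /orP [/eqP xpx | /eqP/esym //].
  by rewrite -xpx -xpx.
have col x : p x != x -> c x = colf x (p x).
  move=> pxx; have xb := inb x; have pxb : p x \in pblock P x by rewrite blk set22.
  have xpx : x != p x by rewrite eq_sym.
  have cne := no11 _ _ _ (bP x) xb pxb xpx.
  rewrite /colf; case: ifP => hlt.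
  - case: (I2cases (c x)) => // cx1; exfalso.
    have cpx : c (p x) = color2.
      by case: (I2cases (c (p x))) cne => -> //; rewrite cx1 eqxx.
    exact: (no12 _ _ _ (bP x) xb pxb hlt cx1 cpx).
  - case: (I2cases (c x)) => // cx2; exfalso.
    have cpx : c (p x) = color1.
      by case: (I2cases (c (p x))) cne => -> //; rewrite cx2 eqxx.
    have hlt' : (p x < x)%N.
      rewrite ltn_neqAle leqNgt hlt andbT; apply: contra pxx => /eqP h.
      by apply/eqP/val_inj.
    exact: (no12 _ _ _ (bP x) pxb xb hlt' cpx cx2).
exists p; split => //.
congr (_, _); apply/setP => B; apply/idP/imsetP.
- move=> BP; have /set0Pn [x xB] : B != set0 by apply: contraNneq P0 => <-.
  by exists x => //; rewrite -blk (def_pblock triv BP xB).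
- by case=> x _ ->; rewrite -blk.
Qed.

Lemma RRT n (p : {ffun 'I_n -> 'I_n}) c : (p, c) \in RR [set: 'I_n] ->
  (forall x, p (p x) = x) /\ (forall x, p x != x -> c x = colf x (p x)).
Proof.
rewrite RRP => /forallP H; split => x; have [h1 h2] := okx_in (in_setT x) (H x) => //.
Qed.

Lemma a_eq n : a n = #|RR [set: 'I_n]|.
Proof.
have inj : {in RR [set: 'I_n] &, injective (@gmap n)}.
  move=> [p c] [p' c'] /RRT [inv _] /RRT [inv' _]; exact: ginj.
rewrite /a -(card_in_imset inj); apply: eq_card => s; rewrite inE.
apply/idP/imsetP.
- move/gsurj => [p [inv col E]]; exists (p, s.2) => //.
  rewrite RRP; apply/forallP => x; rewrite /okx in_setT inv eqxx /=.
  by apply/implyP => /col ->.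
- by case=> -[p c] /RRT [inv col] ->; apply: gvalid.
Qed.

Theorem mainTheorem4 (n : nat) :
  3 <= n -> a n = 2 * a (n - 1) + (n - 1) * a (n - 2).
Proof.
move=> hn; rewrite !a_eq !(RRcard (cardsT _)) !card_ord.
case: n hn => [|[|[|k]]] // _.
Qed.
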